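(* Let $G$ be a finite simple graph containing a leaf (a vertex of degree one), and let $I=I(G)\subset R=K[V(G)]$ be its edge ideal. Then $\operatorname{Ass}(R/I^t)\subset\operatorname{Ass}(R/I^{t+1})$ for all $t\ge1$; that is, the sets of associated primes of the powers of $I$ form an ascending chain.
   Context: $R=K[x_1,\dots,x_n]$ with $K$ a field and the vertices of $G$ identified with the variables; $I(G)$ is generated by the monomials $x_ix_j$ with $\{x_i,x_j\}$ an edge of $G$. $\operatorname{Ass}(M)$ denotes the set of associated primes of an $R$-module $M$. *)

(* Defs.v *)
(* Multivariate polynomial ring K[x_0,...,x_{n-1}] built as
   iterated univariate polynomials K[x_0][x_1]...[x_{n-1}]. *)
From HB Require Import structures.
From mathcomp Require Import all_boot all_order all_algebra.
Set Implicit Arguments. Unset Strict Implicit. Unset Printing Implicit Defensive.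
Import GRing.Theory.
Local Open Scope ring_scope.

Fixpoint mpoly (R : comNzRingType) (n : nat) : comNzRingType :=
  match n with
  | 0 => R
  | n'.+1 => ({poly mpoly R n'} : comNzRingType)
  end.

(* the variable x_i (i < n) of mpoly R n; x_{n-1} is the outermost 'X *)
Fixpoint mvar (R : comNzRingType) (n : nat) : nat -> mpoly R n :=
  match n return nat -> mpoly R n with
  | 0 => fun _ => 0
  | n'.+1 => fun i => if i == n' then ('X : {poly mpoly R n'})
                      else ((mvar R n' i)%:P : {poly mpoly R n'})
  end.

Definition x_ (R : comNzRingType) (n : nat) (i : 'I_n) : mpoly R n := mvar R n i.

Definition ideal_gen (A : comNzRingType) (S : A -> Prop) : A -> Prop :=
  fun f => exists s : seq (A * A),
    (forall p, p \in s -> S p.2) /\ f = \sum_(p <- s) p.1 * p.2.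

Fixpoint prods (A : comNzRingType) (S : A -> Prop) (t : nat) : A -> Prop :=
  match t with
  | 0 => fun g => g = 1
  | t'.+1 => fun g => exists a b, S a /\ prods S t' b /\ g = a * b
  end.

Definition ideal_pow (A : comNzRingType) (I : A -> Prop) (t : nat) : A -> Prop :=
  ideal_gen (prods I t).

Definition prime_ideal (A : comNzRingType) (P : A -> Prop) : Prop :=
  [/\ P 0, ~ P 1,
      (forall a b, P a -> P b -> P (a + b)),
      (forall r a, P a -> P (r * a)) &
      (forall a b, P (a * b) -> P a \/ P b)].

(* P \in Ass(A/J): P is prime and P = Ann_A(f + J) for some f in A *)
Definition Ass (A : comNzRingType) (J : A -> Prop) (P : A -> Prop) : Prop :=
  prime_ideal P /\ exists f : A, forall g, P g <-> J (g * f).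

Definition edge_ideal (K : fieldType) (n : nat) (e : rel 'I_n) : mpoly K n -> Prop :=
  ideal_gen (fun g => exists i j : 'I_n, e i j /\ g = x_ K i * x_ K j).

Definition simple_graph (n : nat) (e : rel 'I_n) : Prop :=
  symmetric e /\ irreflexive e.

Definition has_leaf (n : nat) (e : rel 'I_n) : Prop :=
  exists v : 'I_n, #|[set u | e v u]| = 1%N.

(* Main.v *)
From Stdlib Require Import Setoid.
Require Import Defs.
From HB Require Import structures.
From mathcomp Require Import all_boot all_order all_algebra.
Set Implicit Arguments. Unset Strict Implicit. Unset Printing Implicit Defensive.
Import GRing.Theory.

Section Div.
Local Open Scope ring_scope.
Variable R : comNzRingType.

Fixpoint Dv (n : nat) (w : nat) : mpoly R n -> mpoly R n :=
  match n return mpoly R n -> mpoly R n with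
  | 0 => fun _ => 0
  | n'.+1 => fun p : {poly mpoly R n'} =>
      if w == n' then (\poly_(i < size p) p`_i.+1 : {poly mpoly R n'})
      else (\poly_(i < size p) Dv w p`_i : {poly mpoly R n'})
  end.
Arguments Dv n w : clear implicits.

Lemma Dv0 n w : Dv n w 0 = 0.
Proof.
elim: n => [|n IH]; first done.
by simpl; case: ifP => _; apply/polyP => i; rewrite coef_poly !coef0 ?IH; case: ifP.
Qed.

Lemma coefDv n w (p : {poly mpoly R n}) i :
  (Dv n.+1 w p)`_i = if w == n then p`_i.+1 else Dv n w p`_i.
Proof.
rewrite /=; case: ifP => _; rewrite coef_poly; case: ltnP => // H.
  by rewrite nth_default // (leq_trans H).
by rewrite nth_default // Dv0.
Qed.

Lemma DvD n w (p q : mpoly R n) : Dv n w (p + q) = Dv n w p + Dv n w q.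
Proof.
elim: n w p q => [|n IH] w p q /=; first by rewrite addr0.
apply/polyP => i. rewrite coefD !coefDv; case: ifP => _; rewrite coefD // IH.
Qed.

Lemma L2 n w (r : mpoly R n) : (w < n)%N -> Dv n w (r * mvar R n w) = r.
Proof.
elim: n w r => [|n IH] w r Hw; first done.
rewrite [mvar _ _ _]/=.
case: ifP => Hwn; apply/polyP => i; rewrite coefDv Hwn.
  by rewrite coefMX.
rewrite coefMC IH //.
by move: Hw; rewrite ltnS leq_eqVlt Hwn.
Qed.

Lemma L1 n w i (r : mpoly R n) : i != w ->
  Dv n w (r * mvar R n i) = Dv n w r * mvar R n i.
Proof.
elim: n w i r => [|n IH] w i r Hiw; first by rewrite /= mul0r.
rewrite [mvar _ _ _]/=.
case: (boolP (w == n)) => Hwn.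
  have Hin : (i == n) = false by move/eqP: Hwn => <-; apply/negbTE.
  rewrite Hin; apply/polyP => j; rewrite coefDv Hwn coefMC coefMC coefDv Hwn //.
case: ifP => Hin; apply/polyP => j; rewrite coefDv (negbTE Hwn).
  rewrite !coefMX coefDv (negbTE Hwn); case: (j == 0%N) => //; exact: Dv0.
by rewrite !coefMC coefDv (negbTE Hwn) IH.
Qed.

Lemma Dv_sum n w (s : seq (mpoly R n * mpoly R n)) F :
  Dv n w (\sum_(p <- s) F p) = \sum_(p <- s) Dv n w (F p).
Proof.
elim: s => [|x s IH]; first by rewrite !big_nil Dv0.
by rewrite !big_cons DvD IH.
Qed.
End Div.

Section Ideals.
Local Open Scope ring_scope.
Variable A : comNzRingType.

Lemma ig_gen (S : A -> Prop) x : S x -> ideal_gen S x.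
Proof.
move=> Sx; exists [:: (1, x)]; split; last by rewrite big_seq1 mul1r.
by move=> p; rewrite inE => /eqP ->.
Qed.

Lemma ig0 (S : A -> Prop) : ideal_gen S 0.
Proof. by exists [::]; split => //; rewrite big_nil. Qed.

Lemma igD (S : A -> Prop) x y : ideal_gen S x -> ideal_gen S y -> ideal_gen S (x + y).
Proof.
move=> [s1 [H1 ->]] [s2 [H2 ->]]; exists (s1 ++ s2); split; last by rewrite big_cat.
by move=> p; rewrite mem_cat => /orP [] ?; [apply: H1 | apply: H2].
Qed.

Lemma igM (S : A -> Prop) r x : ideal_gen S x -> ideal_gen S (r * x).
Proof.
move=> [s [H ->]]; exists [seq (r * p.1, p.2) | p <- s]; split.
  by move=> p /mapP [q Hq ->] /=; apply: H.
rewrite big_map mulr_sumr; apply: eq_bigr => q _ /=; by rewrite mulrA.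
Qed.

Lemma igsum (S : A -> Prop) (s : seq (A * A)) F :
  (forall p, p \in s -> ideal_gen S (F p)) -> ideal_gen S (\sum_(p <- s) F p).
Proof.
elim: s => [|x s IH] H; first by rewrite big_nil; apply: ig0.
rewrite big_cons; apply: igD; first by apply: H; rewrite mem_head.
by apply: IH => p Hp; apply: H; rewrite in_cons Hp orbT.
Qed.

Lemma igmul (S1 S2 : A -> Prop) x y : ideal_gen S1 x -> ideal_gen S2 y ->
  ideal_gen (fun z => exists a b, S1 a /\ S2 b /\ z = a * b) (x * y).
Proof.
move=> [s1 [H1 ->]] [s2 [H2 ->]].
rewrite mulr_suml; apply: igsum => p Hp; rewrite -mulrA; apply: igM.
rewrite mulr_sumr; apply: igsum => q Hq.
rewrite mulrCA; apply: igM; apply: ig_gen; exists p.2, q.2; split; first exact: H1.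
by split; first exact: H2.
Qed.

Lemma ig_mono (S S' : A -> Prop) x : (forall z, S z -> S' z) ->
  ideal_gen S x -> ideal_gen S' x.
Proof. by move=> HS [s [H ->]]; exists s; split => // p Hp; apply: HS; apply: H. Qed.

Lemma prods_conv (S : A -> Prop) t a : prods (ideal_gen S) t a -> ideal_gen (prods S t) a.
Proof.
elim: t a => [|t IH] a /=; first by move=> ->; apply: ig_gen.
move=> [x [b [Hx [Hb ->]]]]; exact: igmul Hx (IH _ Hb).
Qed.

Lemma pow_conv (S : A -> Prop) t h :
  ideal_pow (ideal_gen S) t h <-> ideal_gen (prods S t) h.
Proof.
split.
  move=> [s [H ->]]; apply: igsum => p Hp; apply: igM; apply: prods_conv; exact: H.
apply: ig_mono => z; elim: t z => [|t IH] z //=.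
move=> [a [b [Ha [Hb ->]]]]; exists a, b; split; first exact: ig_gen.
by split => //; apply: IH.
Qed.

Lemma J0 (S : A -> Prop) x : ideal_gen (prods S 0) x.
Proof. by rewrite -[x]mulr1; apply: igM; apply: ig_gen. Qed.

Lemma Jmul (S : A -> Prop) m y a : ideal_gen (prods S m) y -> S a ->
  ideal_gen (prods S m.+1) (y * a).
Proof. by move=> Hy Sa; rewrite mulrC; apply: (igmul (ig_gen Sa) Hy). Qed.
End Ideals.


Lemma reord (A : comNzRingType) (c x y b : A) : (c * (x * y * b) = c * b * x * y)%R.
Proof. by rewrite [(x * y * b)%R]mulrC !mulrA. Qed.
Lemma reord' (A : comNzRingType) (c x y b : A) : (c * (y * x * b) = c * b * x * y)%R.
Proof. by rewrite [(y * x)%R]mulrC reord. Qed.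

Lemma reord2 (A : comNzRingType) (d x y w : A) : (d * x * y * w = d * w * (x * y))%R.
Proof. by rewrite -(mulrA d x y) mulrAC. Qed.

Lemma reord3 (A : comNzRingType) (g a b f : A) : (g * (a * b * f) = g * f * (a * b))%R.
Proof. by rewrite [(a * b * f)%R]mulrC (mulrA g f). Qed.

Section Main.
Local Open Scope ring_scope.
Variables (K : fieldType) (n : nat) (e : rel 'I_n).
Hypotheses (hsym : symmetric e) (hirr : irreflexive e).
Variables (v u : 'I_n).
Hypotheses (hvu : e v u) (hleaf : forall j, e v j -> j = u).

Let X (i : 'I_n) : mpoly K n := x_ K i.
Let S : mpoly K n -> Prop := fun g => exists i j : 'I_n, e i j /\ g = X i * X j.
Let D (w : 'I_n) (p : mpoly K n) : mpoly K n := @Dv K n w p.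
Let Phi p := D u (D v p).

Lemma DX2 w r : D w (r * X w) = r.
Proof. exact: L2 (ltn_ord w). Qed.

Lemma DX1 w i r : i != w -> D w (r * X i) = D w r * X i.
Proof. move=> H; exact: L1. Qed.

Lemma DX1' w i (H : i != w) r : D w (r * X i) = D w r * X i.
Proof. exact: DX1. Qed.

Lemma uv_neq : u != v.
Proof. apply/eqP => E; move: hvu; by rewrite E hirr. Qed.

Lemma classify i j : e i j ->
  (i = u /\ j = v) \/ (i = v /\ j = u) \/ (i != v /\ j != v).
Proof.
move=> Hij; case: (eqVneq i v) => Hi.
  by subst i; right; left; split => //; apply: hleaf.
case: (eqVneq j v) => Hj; last by right; right.
subst j; left; split => //; apply: hleaf; by rewrite hsym.
Qed.

Lemma LemV m b c w : prods S m b -> e u w ->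
  ideal_gen (prods S m) (D v (c * b) * X w).
Proof.
elim: m b c => [|m IH] b c Hb Huw; first exact: J0.
case: Hb => a [b' [[i [j [Hij ->]]] [Hb' ->]]].
have Hgen : ideal_gen (prods S m.+1) (c * b' * X u * X w).
  rewrite -mulrA -mulrA; apply: igM; apply: ig_gen.
  exists (X u * X w), b'; split; first by exists u, w.
  by split => //; rewrite mulrC.
case: (classify Hij) => [[-> ->]|[[-> ->]|[Hi Hj]]].
- rewrite reord.
  by rewrite DX2.
- rewrite reord'.
  by rewrite DX2.
- rewrite reord.
  rewrite DX1 // DX1 //.
  rewrite reord2.
  apply: Jmul; first exact: IH.
  by exists i, j.
Qed.

Lemma ClaimC k p c : prods S k.+1 p -> ideal_gen (prods S k) (Phi (c * p)).
Proof.
elim: k p c => [|k IH] p c Hp; first exact: J0.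
case: Hp => a [b [[i [j [Hij ->]]] [Hb ->]]].
have huv := uv_neq.
rewrite /Phi.
case: (classify Hij) => [[-> ->]|[[-> ->]|[Hi Hj]]].
- rewrite reord.
  rewrite DX2 DX2; apply: igM; exact: ig_gen.
- rewrite reord'.
  rewrite DX2 DX2; apply: igM; exact: ig_gen.
- rewrite reord.
  rewrite (DX1' Hj) (DX1' Hi).
  case: (eqVneq i u) => Hiu.
    subst i.
    rewrite mulrAC DX2; apply: LemV => //.
  case: (eqVneq j u) => Hju.
    subst j.
    rewrite DX2; apply: LemV => //; by rewrite hsym.
  rewrite (DX1' Hju) (DX1' Hiu) -mulrA; apply: Jmul; first exact: IH.
  by exists i, j.
Qed.

Lemma Phi_sum (s : seq (mpoly K n * mpoly K n)) F :
  Phi (\sum_(p <- s) F p) = \sum_(p <- s) Phi (F p).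
Proof. by rewrite /Phi /D !Dv_sum. Qed.

Lemma colon t g :
  ideal_gen (prods S t.+1) (g * (X u * X v)) -> ideal_gen (prods S t) g.
Proof.
move=> H.
have -> : g = Phi (g * (X u * X v)) by rewrite /Phi mulrA DX2 DX2.
case: H => s [Hs ->]; rewrite Phi_sum; apply: igsum => p Hp.
apply: ClaimC; exact: Hs.
Qed.

Lemma mulgen t g : ideal_gen (prods S t) g -> ideal_gen (prods S t.+1) (g * (X u * X v)).
Proof. move=> H; apply: Jmul => //; exists u, v; split => //; by rewrite hsym. Qed.

End Main.

Theorem proposition4p20 (K : fieldType) (n : nat) (e : rel 'I_n) :
  simple_graph e -> has_leaf e ->
  forall t : nat, (1 <= t)%N ->
  forall P : mpoly K n -> Prop,
    Ass (ideal_pow (@edge_ideal K n e) t) P ->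
    Ass (ideal_pow (@edge_ideal K n e) t.+1) P.
Proof.
move=> [hsym hirr] [v hv] t _ P [hP [f hf]].
have [u Hu] : exists u, [set u | e v u] = [set u].
  by apply/cards1P; rewrite hv.
have hvu : e v u by have := set11 u; rewrite -Hu inE.
have hleaf : forall j, e v j -> j = u.
  by move=> j Hj; apply/set1P; rewrite -Hu inE.
split => //.
exists (x_ K u * x_ K v * f)%R => g.
apply: iff_trans (hf g) _.
rewrite /edge_ideal !pow_conv.
have -> : (g * (x_ K u * x_ K v * f) = g * f * (x_ K u * x_ K v))%R.
  by rewrite reord3.
split.
  exact: (mulgen hsym hvu).
exact: (colon hsym hirr hvu hleaf).
Qed.
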